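(* Let $\mathcal H_A,\mathcal H_B$ be finite-dimensional Hilbert spaces, $|0_A\rangle\in\mathcal H_A$, $|0_B\rangle\in\mathcal H_B$ unit vectors, $|0\rangle=|0_A\rangle\otimes|0_B\rangle$, and let $|\phi\rangle\in\mathcal H_A\otimes\mathcal H_B$ be a unit vector. Decompose $|\phi\rangle=|x\rangle\otimes|0_B\rangle+|y\rangle$ with $|x\rangle=(\mathbb 1_A\otimes\langle 0_B|)|\phi\rangle$ and $(\mathbb 1_A\otimes\langle 0_B|)|y\rangle=0$, and assume $|y\rangle\neq0$. Fix $0<\epsilon<1$, let $|\psi\rangle=(|0\rangle+\epsilon|\phi\rangle)/\sqrt{\mathcal N}$ with $\mathcal N=1+\epsilon^2+2\epsilon\,\mathrm{Re}\langle0|\phi\rangle$, $\rho_A=\operatorname{tr}_B|\psi\rangle\langle\psi|$, $\mu=\epsilon^2\langle y|y\rangle/\mathcal N$ and $\omega=\operatorname{tr}_B|y\rangle\langle y|/\langle y|y\rangle$. Then $$\mu\,S_1(\omega)\le S_1(\rho_A)\le h_2(\mu)+\mu\,S_1(\omega),$$ where $h_2(x)=-x\log x-(1-x)\log(1-x)$.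
   Context: $S_1(\rho)=-\operatorname{tr}\rho\log\rho$ is the von Neumann entropy. One has $\rho_A=(1-\mu)|v\rangle\langle v|+\mu\,\omega$ with $|v\rangle=(|0_A\rangle+\epsilon|x\rangle)/\sqrt{\mathcal N(1-\mu)}$ a unit vector. *)

(* Defs.v *)
From HB Require Import structures.
From mathcomp Require Import all_boot all_order all_algebra.
From mathcomp Require Import reals exp.
From mathcomp.real_closed Require Import complex.
Set Implicit Arguments. Unset Strict Implicit. Unset Printing Implicit Defensive.
Import Order.TTheory GRing.Theory Num.Theory.
Local Open Scope ring_scope.
Local Open Scope complex_scope.

Definition adjmx (R : rcfType) m n (M : 'M[R[i]]_(m, n)) : 'M[R[i]]_(n, m) :=
  (map_mx (fun z => z^*) M)^T.

(* A vector of
   H_A (x) H_B = C^m (x) C^n is represented by its coefficient matrix in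
   'M_(m, n) (coefficient of e_i (x) f_j at entry (i, j)); column vectors
   'cV_m are vectors of C^m. *)
Definition inner (R : rcfType) m n (u v : 'M[R[i]]_(m, n)) : R[i] :=
  \sum_(i < m) \sum_(j < n) (u i j)^* * v i j.

Definition tens (R : rcfType) m n (a : 'cV[R[i]]_m) (b : 'cV[R[i]]_n)
  : 'M[R[i]]_(m, n) := a *m b^T.

(* (1_A (x) <b|) applied to a bipartite vector. *)
Definition contractB (R : rcfType) m n (b : 'cV[R[i]]_n) (phi : 'M[R[i]]_(m, n))
  : 'cV[R[i]]_m := phi *m map_mx (fun z => z^*) b.

(* tr_B |u><u| for a bipartite vector u. *)
Definition ptraceB_proj (R : rcfType) m n (u : 'M[R[i]]_(m, n)) : 'M[R[i]]_m :=
  u *m adjmx u.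

Definition eigenvalues (R : rcfType) m (A : 'M[R[i]]_m) : seq R[i] :=
  sval (closed_field_poly_normal (char_poly A)).

Definition xlnx (R : realType) (x : R) : R := if 0 < x then x * ln x else 0.

(* von Neumann entropy S_1(rho) = - tr rho log rho = - sum_lambda lambda log lambda
   over the eigenvalues of rho (real parts; rho is a density matrix). *)
Definition vN_entropy (R : realType) m (rho : 'M[R[i]]_m) : R :=
  - \sum_(l <- eigenvalues rho) xlnx (@complex.Re R l).

Definition h2 (R : realType) (x : R) : R := - xlnx x - xlnx (1 - x).

(* Main.v *)
Require Import Defs.
From HB Require Import structures.
From mathcomp Require Import all_boot all_order all_algebra.
From mathcomp Require Import reals exp.
From mathcomp.real_closed Require Import complex.
From mathcomp Require Import ring lra.
From mathcomp Require Import sesquilinear spectral.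
Set Implicit Arguments. Unset Strict Implicit. Unset Printing Implicit Defensive.
Import Order.TTheory GRing.Theory Num.Theory.
Local Open Scope ring_scope.
Local Open Scope complex_scope.

Section Scalar.
Variable R : realType.
Implicit Types x y t : R.

Lemma xlnx0 : xlnx (0:R) = 0.
Proof. by rewrite /xlnx ltxx. Qed.

Lemma xlnx_pos x : 0 < x -> xlnx x = x * ln x.
Proof. by rewrite /xlnx => ->. Qed.

Lemma xlnx_tangent x y : 0 < x -> 0 <= y ->
  xlnx x + (ln x + 1) * (y - x) <= xlnx y.
Proof.
move=> x0; rewrite le_eqVlt => /orP[/eqP <-|y0].
  rewrite xlnx0 xlnx_pos //; lra.
rewrite !xlnx_pos //.
have h : ln (x / y) <= x / y - 1.
  have := @le_ln1Dx R (x / y - 1).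
  have -> : 1 + (x / y - 1) = x / y by ring.
  apply.
  have : 0 < x / y by apply: divr_gt0.
  lra.
rewrite ln_div ?posrE // in h.
have h2 : y * (ln x - ln y) <= y * (x / y - 1) by rewrite ler_wpM2l // ltW.
have e : y * (x / y - 1) = x - y by rewrite mulrBr mulr1 mulrCA divff ?mulr1 ?gt_eqF.
rewrite e in h2.
nra.
Qed.

Lemma xlnx_le0 t : 0 <= t -> t <= 1 -> xlnx t <= 0.
Proof.
move=> t0 t1; rewrite /xlnx; case: ifP => // tp.
by apply: mulr_ge0_le0 => //; apply: ln_le0.
Qed.

Lemma jensen (I : finType) (c d : I -> R) :
  (forall i, 0 <= c i) -> (forall i, 0 <= d i) -> \sum_i c i = 1 ->
  xlnx (\sum_i c i * d i) <= \sum_i c i * xlnx (d i).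
Proof.
move=> c0 d0 c1.
have x0 : 0 <= \sum_i c i * d i by apply: sumr_ge0 => i _; apply: mulr_ge0.
move: x0; rewrite le_eqVlt => /orP[/eqP x0|xp].
  rewrite -x0 xlnx0; apply: sumr_ge0 => i _.
  have := @psumr_eq0P _ _ predT _ (fun i _ => mulr_ge0 (c0 i) (d0 i)) (esym x0) i isT.
  move/eqP; rewrite mulf_eq0 => /orP[/eqP ->|/eqP ->]; first by rewrite mul0r.
  by rewrite xlnx0 mulr0.
set x := \sum_i c i * d i in xp *.
have h i : c i * (xlnx x + (ln x + 1) * (d i - x)) <= c i * xlnx (d i).
  by rewrite ler_wpM2l // xlnx_tangent.
apply: le_trans (ler_sum _ (fun i _ => h i)).
rewrite (eq_bigr (fun i => c i * xlnx x + (ln x + 1) * (c i * d i) - (ln x + 1) * x * c i)); last first.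
  by move=> i _; ring.
rewrite !big_split /= sumrN -mulr_suml -!mulr_sumr c1 -/x.
lra.
Qed.

Lemma pinch_real (I J : finType) (c : I -> J -> R) (d : J -> R) :
  (forall i j, 0 <= c i j) -> (forall j, 0 <= d j) ->
  (forall i, \sum_j c i j = 1) -> (forall j, \sum_i c i j = 1) ->
  \sum_i xlnx (\sum_j c i j * d j) <= \sum_j xlnx (d j).
Proof.
move=> c0 d0 r1 c1.
apply: (le_trans (y := \sum_i \sum_j c i j * xlnx (d j))).
  by apply: ler_sum => i _; apply: jensen.
rewrite exchange_big /=; apply: ler_sum => j _.
by rewrite -mulr_suml c1 mul1r.
Qed.

Lemma mix_lower (p mu a b : R) : 0 <= mu -> p + mu = 1 -> 0 <= a -> a <= p -> 0 <= b ->
  xlnx (a + mu * b) <= mu * xlnx b.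
Proof.
move=> mu0 pmu a0 ap b0.
have p0 : 0 <= p by apply: le_trans ap.
move: p0; rewrite le_eqVlt => /orP[/eqP p0|pp].
  have -> : a = 0 by subst p; apply/eqP; rewrite eq_le a0 ap.
  have -> : mu = 1 by lra.
  by rewrite add0r !mul1r.
have x0 : 0 <= a + mu * b by apply: addr_ge0 => //; apply: mulr_ge0.
move: x0; rewrite le_eqVlt => /orP[/eqP x0|xp].
  rewrite -x0 xlnx0.
  have mb0 : mu * b = 0.
    have : 0 <= mu * b by apply: mulr_ge0.
    lra.
  move/eqP: mb0; rewrite mulf_eq0 => /orP[/eqP ->|/eqP ->]; first by rewrite mul0r.
  by rewrite xlnx0 mulr0.
set x := a + mu * b in xp *.
have h1 := @xlnx_tangent x (a / p) xp (divr_ge0 a0 (ltW pp)).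
have h2 := @xlnx_tangent x b xp b0.
have h3 : xlnx (a / p) <= 0.
  apply: xlnx_le0; first exact: divr_ge0 a0 (ltW pp).
  by rewrite ler_pdivrMr // mul1r.
have e : p * (a / p) = a by rewrite mulrCA divff ?mulr1 ?gt_eqF.
have h1' : p * (xlnx x + (ln x + 1) * (a / p - x)) <= p * xlnx (a / p).
  by rewrite ler_wpM2l // ltW.
have h2' : mu * (xlnx x + (ln x + 1) * (b - x)) <= mu * xlnx b.
  by rewrite ler_wpM2l.
have : p * (xlnx x + (ln x + 1) * (a / p - x)) + mu * (xlnx x + (ln x + 1) * (b - x)) = xlnx x.
  have -> : p * (xlnx x + (ln x + 1) * (a / p - x)) + mu * (xlnx x + (ln x + 1) * (b - x))
    = (p + mu) * xlnx x + (ln x + 1) * (p * (a / p) + mu * b - (p + mu) * x) by ring.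
  rewrite e pmu /x; ring.
have h4 : p * xlnx (a / p) <= 0 by apply: mulr_ge0_le0 => //; apply: ltW.
lra.
Qed.

Lemma xlnx_scale (mu t : R) : 0 < mu -> 0 <= t ->
  xlnx (mu * t) = mu * xlnx t + t * xlnx mu.
Proof.
move=> mu0; rewrite le_eqVlt => /orP[/eqP <-|tp].
  by rewrite mulr0 xlnx0 mulr0 mul0r addr0.
rewrite !xlnx_pos ?mulr_gt0 // lnM ?posrE //; ring.
Qed.

End Scalar.

Section Mat.
Variable R : realType.
Local Notation C := R[i].

Lemma eig_prod n (A : 'M[C]_n) :
  char_poly A = \prod_(z <- eigenvalues A) ('X - z%:P).
Proof.
rewrite /eigenvalues; case: closed_field_poly_normal => s /= e.
by rewrite {1}e (monicP (char_poly_monic A)) scale1r.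
Qed.

Lemma vN_perm n (A : 'M[C]_n) s : char_poly A = \prod_(z <- s) ('X - z%:P) ->
  vN_entropy A = - \sum_(l <- s) xlnx (complex.Re l).
Proof.
move=> e; rewrite /vN_entropy; congr (- _); apply: perm_big.
by apply: prod_XsubC_eq; rewrite -eig_prod.
Qed.

Lemma ABBA p q (A : 'M[C]_(p, q)) (B : 'M[C]_(q, p)) :
  'X^q * char_poly (A *m B) = 'X^p * char_poly (B *m A).
Proof.
pose Ap := map_mx polyC A; pose Bp := map_mx polyC B.
pose M := block_mx ('X%:M : 'M_p) Ap Bp (1%:M : 'M_q).
pose L := block_mx (1%:M : 'M_p) 0 (- Bp) ('X%:M : 'M_q).
pose N := block_mx (1%:M : 'M_p) (- Ap) 0 ('X%:M : 'M_q).
have e1 : L *m M = block_mx ('X%:M) Ap 0 (char_poly_mx (B *m A)).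
  rewrite mulmx_block /char_poly_mx map_mxM -/Ap -/Bp.
  rewrite !mul1mx !mul0mx !addr0 mulmx1.
  by rewrite !mulNmx scalar_mxC addNr [_ + 'X%:M]addrC.
have e2 : N *m M = block_mx (char_poly_mx (A *m B)) 0 ('X *: Bp) ('X%:M).
  rewrite mulmx_block /char_poly_mx map_mxM -/Ap -/Bp.
  rewrite !mul1mx !mul0mx !add0r mulmx1.
  by rewrite !mulmx1 mulNmx subrr mul_scalar_mx.
have := congr1 determinant e1; rewrite det_mulmx det_ublock det_lblock !det_scalar.
have := congr1 determinant e2; rewrite det_mulmx det_ublock det_lblock !det_scalar.
rewrite /char_poly expr1n !mul1r => h1 h2; by rewrite mulrC -h1 h2.
Qed.

Lemma prod_nseq0 q : \prod_(z <- nseq q (0 : C)) ('X - z%:P) = 'X^q.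
Proof.
rewrite big_nseq subr0; elim: q => [|q IH] /=; first by rewrite expr0.
by rewrite IH exprS.
Qed.

Lemma vN_swap p q (A : 'M[C]_(p, q)) (B : 'M[C]_(q, p)) :
  vN_entropy (A *m B) = vN_entropy (B *m A).
Proof.
have e := ABBA A B.
rewrite !eig_prod -!prod_nseq0 -!big_cat /= in e.
have pe := prod_XsubC_eq e.
rewrite /vN_entropy; congr (- _).
have : \sum_(l <- nseq q 0 ++ eigenvalues (A *m B)) xlnx (complex.Re l) =
        \sum_(l <- nseq p 0 ++ eigenvalues (B *m A)) xlnx (complex.Re l).
  exact: perm_big.
rewrite !big_cat /= !big_nseq.
have h k : iter k (+%R (xlnx (complex.Re (0 : C)))) 0 = 0 :> R.
  by elim: k => //= k ->; rewrite xlnx0 addr0.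
by rewrite !h !add0r.
Qed.

Lemma vN_diag n (d : 'rV[C]_n) :
  vN_entropy (diag_mx d) = - \sum_i xlnx (complex.Re (d 0 i)).
Proof.
rewrite (@vN_perm _ _ [seq d 0 i | i <- enum 'I_n]).
  by rewrite big_map big_enum.
rewrite char_poly_trig ?diag_mx_is_trig // big_map big_enum /=.
by apply: eq_bigr => i _; rewrite mxE eqxx mulr1n.
Qed.

Lemma adjmxE m n (A : 'M[C]_(m, n)) i j : adjmx A i j = (A j i)^*.
Proof. by rewrite /adjmx !mxE. Qed.

Lemma adjmxM m n p (A : 'M[C]_(m, n)) (B : 'M[C]_(n, p)) :
  adjmx (A *m B) = adjmx B *m adjmx A.
Proof.
apply/matrixP => i j; rewrite !mxE rmorph_sum; apply: eq_bigr => k _.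
by rewrite !mxE rmorphM mulrC.
Qed.

Lemma adjmxD m n (A B : 'M[C]_(m, n)) : adjmx (A + B) = adjmx A + adjmx B.
Proof. by apply/matrixP => i j; rewrite !mxE rmorphD. Qed.

Lemma adjmxZ m n k (A : 'M[C]_(m, n)) : adjmx (k *: A) = k^* *: adjmx A.
Proof. by apply/matrixP => i j; rewrite !mxE rmorphM. Qed.

Lemma adjmxK m n (A : 'M[C]_(m, n)) : adjmx (adjmx A) = A.
Proof. by apply/matrixP => i j; rewrite !mxE conjcK. Qed.

Lemma adjmx0 m n : adjmx (0 : 'M[C]_(m, n)) = 0.
Proof. by apply/matrixP => i j; rewrite !mxE conjc0. Qed.

Lemma vN_conj n (U D : 'M[C]_n) : U *m adjmx U = 1%:M ->
  vN_entropy (adjmx U *m D *m U) = vN_entropy D.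
Proof.
by move=> uU; rewrite vN_swap mulmxA uU mul1mx.
Qed.

End Mat.

Section Spec.
Variable R : realType.
Local Notation C := R[i].
Local Notation Rec := (@complex.Re R).
Local Notation Imc := (@complex.Im R).

Lemma cReD (x y : C) : Rec (x + y) = Rec x + Rec y.
Proof. by case: x => a b; case: y => c d. Qed.

Lemma cRe_sum (I : finType) (F : I -> C) : Rec (\sum_i F i) = \sum_i Rec (F i).
Proof. by apply: (big_morph Rec cReD). Qed.

Lemma cReM (z : C) r : Rec (z * r%:C * z^*) = Rec (z * z^*) * r.
Proof. case: z => a b /=; ring. Qed.

Lemma cReJ_ge0 (z : C) : 0 <= Rec (z * z^*).
Proof. case: z => a b /=; nra. Qed.

Lemma cRe1 : Rec (1 : C) = 1. Proof. by []. Qed.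

Lemma creal_eta (z : C) : Imc z = 0 -> z = (Rec z)%:C.
Proof. by case: z => a b /= ->. Qed.

Lemma tstar_adj m n (M : 'M[C]_(m, n)) : (M ^t* )%sesqui = adjmx M.
Proof. by rewrite /adjmx map_trmx. Qed.

Lemma herm_spec n (A : 'M[C]_n) : adjmx A = A ->
  exists (U : 'M[C]_n) (d : 'rV[C]_n), U *m adjmx U = 1%:M /\ A = adjmx U *m diag_mx d *m U.
Proof.
move=> hA.
have nA : A \is @normalmx _ n.
  apply/normalmxP. rewrite (tstar_adj A). rewrite hA. done.
move/orthomx_spectralP: nA => e.
have uP := spectral_unitarymx A.
exists (spectralmx A), (spectral_diag A); split.
  have := (unitarymxP uP). rewrite (tstar_adj (spectralmx A)). done.
rewrite {1}e. rewrite (invmx_unitary uP). rewrite (tstar_adj (spectralmx A)). done.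
Qed.
Lemma gram_diag m n (Y : 'M[C]_(m, n)) i :
  (Y *m adjmx Y) i i = \sum_k Y i k * (Y i k)^*.
Proof. rewrite !mxE; apply: eq_bigr => k _; by rewrite adjmxE. Qed.

Lemma gram_ge0 m n (Y : 'M[C]_(m, n)) i : 0 <= (Y *m adjmx Y) i i.
Proof. rewrite gram_diag; apply: sumr_ge0 => k _; exact: mulcJ_ge0. Qed.

Lemma ge0_ReIm (z : C) : 0 <= z -> Imc z = 0 /\ 0 <= Rec z.
Proof. rewrite lecE => /andP[/eqP h1 h2]; split; [exact: h1 | exact: h2]. Qed.

Lemma conj_unit n (U : 'M[C]_n) (D : 'M[C]_n) : U *m adjmx U = 1%:M ->
  U *m (adjmx U *m D *m U) *m adjmx U = D.
Proof.
move=> uU; rewrite !mulmxA uU mul1mx -mulmxA uU mulmx1. done.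
Qed.

Lemma psd_spec p q (X : 'M[C]_(p, q)) : exists (U : 'M[C]_p) (d : 'rV[C]_p),
  [/\ U *m adjmx U = 1%:M, X *m adjmx X = adjmx U *m diag_mx d *m U &
      forall i, Imc (d 0 i) = 0 /\ 0 <= Rec (d 0 i)].
Proof.
have h : adjmx (X *m adjmx X) = X *m adjmx X by rewrite adjmxM adjmxK.
have [U [d [uU e]]] := herm_spec h.
exists U, d; split => // i.
apply: ge0_ReIm.
have : (U *m (X *m adjmx X) *m adjmx U) i i = d 0 i.
  rewrite {1}e conj_unit // mxE eqxx mulr1n. done.
move=> <-.
have -> : U *m (X *m adjmx X) *m adjmx U = (U *m X) *m adjmx (U *m X).
  by rewrite adjmxM !mulmxA.
exact: gram_ge0.
Qed.

Lemma pinch n (A U W : 'M[C]_n) (d : 'rV[C]_n) :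
  U *m adjmx U = 1%:M -> W *m adjmx W = 1%:M ->
  A = adjmx U *m diag_mx d *m U ->
  (forall i, Imc (d 0 i) = 0 /\ 0 <= Rec (d 0 i)) ->
  \sum_k xlnx (Rec ((W *m A *m adjmx W) k k)) <= \sum_i xlnx (Rec (d 0 i)).
Proof.
move=> uU wW eA hd.
pose Z := W *m adjmx U.
have aUU : adjmx U *m U = 1%:M by apply: mulmx1C.
have ZZ : Z *m adjmx Z = 1%:M.
  rewrite /Z adjmxM adjmxK !mulmxA -(mulmxA W) aUU mulmx1. exact: wW.
have ZZ' : adjmx Z *m Z = 1%:M by apply: mulmx1C.
have eW : W *m A *m adjmx W = Z *m diag_mx d *m adjmx Z.
  rewrite eA /Z adjmxM adjmxK !mulmxA. done.
pose c k i := Rec (Z k i * (Z k i)^*).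
have ent k : Rec ((W *m A *m adjmx W) k k) = \sum_i c k i * Rec (d 0 i).
  rewrite eW mxE cRe_sum; apply: eq_bigr => i _.
  rewrite mul_mx_diag mxE adjmxE (creal_eta (proj1 (hd i))) cReM /c. done.
under eq_bigr do rewrite ent.
apply: pinch_real.
- move=> k i; exact: cReJ_ge0.
- by move=> i; case: (hd i).
- move=> k; rewrite /c -cRe_sum -gram_diag ZZ mxE eqxx mulr1n. done.
- move=> i; rewrite /c -cRe_sum.
  have -> : \sum_k Z k i * (Z k i)^* = (adjmx Z *m Z) i i.
    rewrite mxE; apply: eq_bigr => k _; rewrite adjmxE mulrC. done.
  rewrite ZZ' mxE eqxx mulr1n. done.
Qed.

End Spec.

Section Inner.
Variable R : realType.
Local Notation C := R[i].
Local Notation Rec := (@complex.Re R).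
Local Notation Imc := (@complex.Im R).

Lemma inner_tr m n (M : 'M[C]_(m, n)) : \tr (M *m adjmx M) = inner M M.
Proof.
rewrite /mxtrace /inner; apply: eq_bigr => i _; rewrite mxE.
apply: eq_bigr => j _; rewrite adjmxE mulrC. done.
Qed.

Lemma innerDl m n (u v w : 'M[C]_(m, n)) : inner (u + v) w = inner u w + inner v w.
Proof.
rewrite /inner -big_split; apply: eq_bigr => i _; rewrite -big_split.
apply: eq_bigr => j _; rewrite mxE rmorphD mulrDl. done.
Qed.

Lemma innerDr m n (u v w : 'M[C]_(m, n)) : inner w (u + v) = inner w u + inner w v.
Proof.
rewrite /inner -big_split; apply: eq_bigr => i _; rewrite -big_split.
apply: eq_bigr => j _; rewrite mxE mulrDr. done.
Qed.

Lemma innerZl m n k (u v : 'M[C]_(m, n)) : inner (k *: u) v = k^* * inner u v.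
Proof.
rewrite /inner mulr_sumr; apply: eq_bigr => i _; rewrite mulr_sumr.
apply: eq_bigr => j _; rewrite mxE rmorphM mulrA. done.
Qed.

Lemma innerZr m n k (u v : 'M[C]_(m, n)) : inner u (k *: v) = k * inner u v.
Proof.
rewrite /inner mulr_sumr; apply: eq_bigr => i _; rewrite mulr_sumr.
apply: eq_bigr => j _; rewrite mxE mulrCA. done.
Qed.

Lemma inner_conj m n (u v : 'M[C]_(m, n)) : inner v u = (inner u v)^*.
Proof.
rewrite /inner rmorph_sum; apply: eq_bigr => i _; rewrite rmorph_sum.
apply: eq_bigr => j _; rewrite rmorphM /= conjcK mulrC. done.
Qed.

Lemma cRe_conj (z : C) : Rec (z^*) = Rec z.
Proof. by case: z. Qed.

Lemma cRe_realM (r : R) (z : C) : Rec (r%:C * z) = r * Rec z.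
Proof. case: z => a b /=; ring. Qed.

Lemma cconj_real (r : R) : (r%:C)^* = r%:C.
Proof. rewrite /conjc /= oppr0. done. Qed.

Lemma Re_inner_ge0 m n (u : 'M[C]_(m, n)) : 0 <= Rec (inner u u).
Proof.
rewrite /inner cRe_sum; apply: sumr_ge0 => i _; rewrite cRe_sum.
apply: sumr_ge0 => j _; rewrite mulrC; exact: cReJ_ge0.
Qed.

Lemma tr_conj n (U M : 'M[C]_n) : adjmx U *m U = 1%:M -> \tr (U *m M *m adjmx U) = \tr M.
Proof. move=> h; rewrite mxtrace_mulC mulmxA h mul1mx. done. Qed.

Lemma le_sum_term (I : finType) (F : I -> R) i : (forall j, 0 <= F j) -> F i <= \sum_j F j.
Proof.
move=> h; rewrite (bigD1 i) //= lerDl; apply: sumr_ge0 => j _; exact: h.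
Qed.

Lemma adjmx1 n : adjmx (1%:M : 'M[C]_n) = 1%:M.
Proof.
apply/matrixP => i j; rewrite adjmxE !mxE rmorph_nat eq_sym. done.
Qed.

Lemma tr_gram_Re m n (M : 'M[C]_(m, n)) :
  Rec (\tr (M *m adjmx M)) = \sum_i Rec ((M *m adjmx M) i i).
Proof. by rewrite /mxtrace cRe_sum. Qed.

Lemma cReJ_eq0 (z : C) : Rec (z^* * z) = 0 -> z = 0.
Proof.
case: z => a b /= h.
have ha : a = 0 by nra.
have hb : b = 0 by nra.
rewrite ha hb. done.
Qed.

Lemma cinner0 m n (u : 'M[C]_(m, n)) : Rec (inner u u) = 0 -> u = 0.
Proof.
rewrite /inner cRe_sum => h; apply/matrixP => i j; rewrite mxE.
have hi : forall i, 0 <= Rec (\sum_j (u i j)^* * u i j).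
  move=> i'; rewrite cRe_sum; apply: sumr_ge0 => j' _; rewrite mulrC; exact: cReJ_ge0.
have := @psumr_eq0P _ _ predT _ (fun i _ => hi i) h i isT.
rewrite cRe_sum => h2.
have hj : forall j, 0 <= Rec ((u i j)^* * u i j).
  move=> j'; rewrite mulrC; exact: cReJ_ge0.
apply: cReJ_eq0; exact: (@psumr_eq0P _ _ predT _ (fun j _ => hj j) h2 j isT).
Qed.

Lemma adjmx_row m n1 n2 (A : 'M[C]_(m, n1)) (B : 'M[C]_(m, n2)) :
  adjmx (row_mx A B) = col_mx (adjmx A) (adjmx B).
Proof. rewrite /adjmx map_row_mx tr_row_mx. done. Qed.

Lemma adjmx_diag n (g : 'rV[C]_n) : adjmx (diag_mx g) = diag_mx (map_mx conjc g).
Proof.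
apply/matrixP => i j; rewrite adjmxE !mxE rmorphMn.
case: (eqVneq i j) => [->|h]. reflexivity.
rewrite !mulr0n. done.
Qed.

Lemma cRe_Jg (z : C) (g : R) : Rec (((z^*) * g%:C)^* * (z^* * g%:C)) = Rec (z * z^*) * (g * g).
Proof. case: z => a b /=; ring. Qed.

Lemma nconjE (z : C) : Num.conj z = conjc z.
Proof. reflexivity. Qed.

Lemma realCM (a b : R) : (a * b)%:C = a%:C * b%:C.
Proof. by rewrite rmorphM. Qed.

Lemma sqrtC_sq (a : R) : 0 <= a -> (Num.sqrt a)%:C * (Num.sqrt a)%:C = a%:C.
Proof. by move=> h; rewrite -rmorphM -expr2 sqr_sqrtr. Qed.

End Inner.

Unset Implicit Arguments.
Theorem mainTheorem2 (R : realType) (m n : nat)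
    (a0 : 'cV[R[i]]_m) (b0 : 'cV[R[i]]_n) (phi : 'M[R[i]]_(m, n)) (eps : R) :
  inner a0 a0 = 1 -> inner b0 b0 = 1 -> inner phi phi = 1 ->
  let x := contractB b0 phi in
  let y := phi - tens x b0 in
  y != 0 ->
  0 < eps -> eps < 1 ->
  let zero := tens a0 b0 in
  let N := 1 + eps ^+ 2 + 2 * eps * @complex.Re R (inner zero phi) in
  let psi := (Num.sqrt N)^-1%:C *: (zero + eps%:C *: phi) in
  let rhoA := ptraceB_proj psi in
  let mu := eps ^+ 2 * @complex.Re R (inner y y) / N in
  let omega := (@complex.Re R (inner y y))^-1%:C *: ptraceB_proj y in
  mu * vN_entropy omega <= vN_entropy rhoA /\
  vN_entropy rhoA <= h2 mu + mu * vN_entropy omega.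
Proof.
move=> ha hb hphi x y hy e0 e1 zero N psi rhoA mu omega.
pose cb0 := map_mx (fun z : R[i] => z^*) b0.
have bb : b0^T *m cb0 = 1%:M.
  apply/matrixP => i j; rewrite !ord1 !mxE -hb /inner /=.
  apply: eq_bigr => k _; rewrite big_ord1 !mxE mulrC. done.
have ycb : y *m cb0 = 0.
  rewrite /y /tens mulmxBl -mulmxA bb mulmx1 /x /contractB subrr. done.
have ephi : phi = y + x *m b0^T by rewrite /y /tens subrK.
have aCb : adjmx cb0 = b0^T by apply/matrixP => i j; rewrite !mxE conjcK.
have adjbT : adjmx (b0^T) = cb0 by apply/matrixP => i j; rewrite !mxE.
clearbody y x.
set r := complex.Re (inner zero phi).
have zz : inner zero zero = 1.
  rewrite -[1]mulr1 -{1}ha -hb /inner /zero /tens big_distrl /=.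
  apply: eq_bigr => i _; rewrite big_ord1 big_distrr /=; apply: eq_bigr => j _.
  rewrite big_ord1 !mxE !big_ord1 !mxE rmorphM; ring.
have expand t : complex.Re (inner (zero + t%:C *: phi) (zero + t%:C *: phi)) = 1 + t ^+ 2 + 2 * t * r.
  rewrite !innerDl !innerDr !innerZl !innerZr !nconjE cconj_real zz hphi (inner_conj zero phi).
  rewrite !cReD !cRe_realM cRe_conj mulr1 -/r.
  change (complex.Re (1 : R[i])) with (1 : R). ring.
have r2 : r ^+ 2 <= 1.
  have := Re_inner_ge0 (zero + (- r)%:C *: phi); rewrite expand. nra.
have r1 : -1 <= r by nra.
have Npos : 0 < N by rewrite /N -/r; nra.
set s := (Num.sqrt N)^-1.
have ss : s * s = N^-1.
  rewrite /s -invfM -expr2 sqr_sqrtr //; exact: ltW.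
pose w := s%:C *: (a0 + eps%:C *: x).
pose Y := (s * eps)%:C *: y.
have epsi : psi = w *m b0^T + Y.
  rewrite /psi /zero /tens ephi /w /Y -/s.
  apply/matrixP => i j; rewrite !mxE !big_ord1 !mxE rmorphM; ring.
have Ycb : Y *m cb0 = 0 by rewrite /Y -scalemxAl ycb scaler0.
have erho : rhoA = w *m adjmx w + Y *m adjmx Y.
  rewrite /rhoA /ptraceB_proj epsi adjmxD adjmxM adjbT mulmxDl !mulmxDr.
  have -> : w *m b0^T *m (cb0 *m adjmx w) = w *m adjmx w.
    rewrite mulmxA -(mulmxA w) bb mulmx1. done.
  have -> : w *m b0^T *m adjmx Y = 0.
    rewrite -mulmxA -aCb -adjmxM Ycb adjmx0 mulmx0. done.
  have -> : Y *m (cb0 *m adjmx w) = 0.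
    rewrite mulmxA Ycb mul0mx. done.
  rewrite addr0 add0r. done.
have tr1 : complex.Re (\tr rhoA) = 1.
  rewrite /rhoA /ptraceB_proj inner_tr /psi innerZl innerZr !nconjE cconj_real -/s.
  rewrite mulrA -rmorphM cRe_realM expand ss -/r mulVf //. exact: lt0r_neq0.
set ny := complex.Re (inner y y).
have nypos : 0 < ny.
  rewrite lt0r Re_inner_ge0 andbT; apply/eqP => h; move/negP: hy; apply.
  apply/eqP; exact: cinner0 h.
have trY : complex.Re (\tr (Y *m adjmx Y)) = mu.
  rewrite inner_tr /Y innerZl innerZr !nconjE cconj_real mulrA -rmorphM cRe_realM -/ny.
  rewrite /mu; have -> : s * eps * (s * eps) = (s * s) * eps ^+ 2 by ring.
  rewrite ss; field; exact: lt0r_neq0.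
set p := complex.Re (\tr (w *m adjmx w)).
have pmu : p + mu = 1 by rewrite -tr1 erho mxtraceD cReD trY.
have mupos : 0 < mu by rewrite /mu; apply: divr_gt0 => //; apply: mulr_gt0 => //; apply: exprn_gt0.
set k := Num.sqrt ny^-1.
pose Xo := k%:C *: y.
have eomega : omega = Xo *m adjmx Xo.
  rewrite /omega /ptraceB_proj /Xo adjmxZ !nconjE cconj_real -scalemxAl -scalemxAr scalerA -rmorphM.
  rewrite /k -expr2 sqr_sqrtr // invr_ge0; exact: ltW.
have eYo : Y *m adjmx Y = mu%:C *: omega.
  rewrite /omega /ptraceB_proj /Y adjmxZ !nconjE cconj_real -scalemxAl -scalemxAr !scalerA -!rmorphM.
  congr (_%:C *: _).
  have -> : s * eps * (s * eps) = (s * s) * eps ^+ 2 by ring.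
  rewrite ss /mu -/ny; field; apply/andP; split; [exact: lt0r_neq0 nypos | exact: lt0r_neq0 Npos].
have tro : complex.Re (\tr omega) = 1.
  rewrite /omega mxtraceZ cRe_realM /ptraceB_proj inner_tr -/ny mulVf //; exact: lt0r_neq0.
clearbody w Y.
have [U [rr [uU erU hr]]] := psd_spec psi.
have erh : rhoA = adjmx U *m diag_mx rr *m U by exact: erU.
have vNr : vN_entropy rhoA = - \sum_i xlnx (complex.Re (rr 0 i)).
  rewrite erh vN_conj. exact: vN_diag. exact: uU.
have [V [t [vV etV ht]]] := psd_spec Xo.
have eo : omega = adjmx V *m diag_mx t *m V by rewrite eomega.
have vNo : vN_entropy omega = - \sum_i xlnx (complex.Re (t 0 i)).
  rewrite eo vN_conj. exact: vN_diag. exact: vV.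
have aUU : adjmx U *m U = 1%:M by apply: mulmx1C.
pose a i := complex.Re (((U *m w) *m adjmx (U *m w)) i i).
pose b i := complex.Re (((U *m Xo) *m adjmx (U *m Xo)) i i).
have eUo : U *m omega *m adjmx U = (U *m Xo) *m adjmx (U *m Xo).
  rewrite eomega adjmxM !mulmxA. done.
have eUr : U *m rhoA *m adjmx U = (U *m w) *m adjmx (U *m w) + mu%:C *: ((U *m Xo) *m adjmx (U *m Xo)).
  rewrite erho eYo mulmxDr mulmxDl -eUo -scalemxAr -scalemxAl adjmxM !mulmxA. done.
have rri i : complex.Re (rr 0 i) = a i + mu * b i.
  have : (U *m rhoA *m adjmx U) i i = rr 0 i.
    rewrite {1}erh conj_unit // mxE eqxx mulr1n. done.
  move=> <-; rewrite eUr.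
  have -> : forall (M1 M2 : 'M[R[i]]_m) (c : R[i]), (M1 + c *: M2) i i = M1 i i + c * M2 i i.
    by move=> M1 M2 c; rewrite !mxE.
  rewrite cReD cRe_realM. done.
have a0i i : 0 <= a i.
  have [_ h] := ge0_ReIm (gram_ge0 (U *m w) i); exact: h.
have b0i i : 0 <= b i.
  have [_ h] := ge0_ReIm (gram_ge0 (U *m Xo) i); exact: h.
have suma : \sum_i a i = p.
  rewrite /a -tr_gram_Re adjmxM !mulmxA -(mulmxA U) tr_conj. done. exact: aUU.
have aip i : a i <= p by rewrite -suma; apply: le_sum_term.
have pin1 := pinch (W := U) vV uU eo ht.
rewrite eUo -/b in pin1.
split.
  have h1 : \sum_i xlnx (complex.Re (rr 0 i)) <= mu * \sum_i xlnx (b i).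
    rewrite mulr_sumr; apply: ler_sum => i _; rewrite rri.
    apply: (mix_lower (p := p)) => //; exact: ltW.
  have h2 : mu * \sum_i xlnx (b i) <= mu * \sum_i xlnx (complex.Re (t 0 i)).
    by rewrite ler_wpM2l // ltW.
  rewrite vNr vNo; lra.
have aVV : adjmx V *m V = 1%:M by apply: mulmx1C.
pose g := \row_j (Num.sqrt (mu * complex.Re (t 0 j)))%:C.
have tpos j : 0 <= complex.Re (t 0 j) by have [_ h] := ht j; exact: h.
have dg : diag_mx g *m adjmx (diag_mx g) = mu%:C *: diag_mx t.
  rewrite adjmx_diag mulmx_diag; apply/matrixP => i j; rewrite !mxE.
  case: (i == j); last by rewrite !mulr0n mulr0.
  rewrite !mulr1n cconj_real sqrtC_sq; last by apply: mulr_ge0; [exact: ltW | exact: tpos].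
  rewrite realCM; congr (_ * _); exact: (esym (creal_eta (proj1 (ht i)))).
pose Z := row_mx w (adjmx V *m diag_mx g).
have eZ : Z *m adjmx Z = rhoA.
  rewrite /Z adjmx_row mul_row_col adjmxM adjmxK erho eYo eo.
  congr (_ + _).
  rewrite mulmxA -(mulmxA (adjmx V)) dg -scalemxAr -scalemxAl. done.
have vNup : vN_entropy rhoA = vN_entropy (adjmx Z *m Z) by rewrite -eZ vN_swap.
have [U2 [d2 [u2 ed2 hd2]]] := psd_spec (adjmx Z).
rewrite adjmxK in ed2.
have vN2 : vN_entropy (adjmx Z *m Z) = - \sum_i xlnx (complex.Re (d2 0 i)).
  rewrite ed2 vN_conj. exact: vN_diag. exact: u2.
have one1 : (1%:M : 'M[R[i]]_(1 + m)) *m adjmx 1%:M = 1%:M by rewrite adjmx1 mulmx1.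
have pin2 := pinch u2 one1 ed2 hd2.
rewrite mul1mx adjmx1 mulmx1 big_split_ord /= big_ord1 in pin2.
have hl : complex.Re ((adjmx Z *m Z) (lshift m ord0) (lshift m ord0)) = p.
  rewrite /p tr_gram_Re mxE cRe_sum; apply: eq_bigr => i _.
  rewrite gram_diag big_ord1 adjmxE /Z row_mxEl mulrC. done.
have hrs j : complex.Re ((adjmx Z *m Z) (rshift 1 j) (rshift 1 j)) = mu * complex.Re (t 0 j).
  rewrite mxE cRe_sum.
  under eq_bigr do rewrite adjmxE /Z row_mxEr mul_mx_diag mxE adjmxE mxE cRe_Jg.
  rewrite -mulr_suml.
  have -> : \sum_i complex.Re (V j i * (V j i)^*) = 1.
    rewrite -cRe_sum -gram_diag vV mxE eqxx mulr1n. done.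
  rewrite mul1r -expr2 sqr_sqrtr //; apply: mulr_ge0; [exact: ltW | exact: tpos].
have sumt : \sum_j complex.Re (t 0 j) = 1.
  rewrite -cRe_sum -tro eo mxtrace_mulC mulmxA vV mul1mx mxtrace_diag. done.
have hs : \sum_j xlnx (mu * complex.Re (t 0 j)) = mu * \sum_j xlnx (complex.Re (t 0 j)) + xlnx mu.
  rewrite (eq_bigr _ (fun j _ => xlnx_scale mupos (tpos j))) big_split /= -mulr_sumr -mulr_suml sumt mul1r. done.
have hsum : \sum_(i < m) xlnx (complex.Re ((adjmx Z *m Z) (rshift 1 i) (rshift 1 i))) = \sum_j xlnx (mu * complex.Re (t 0 j)).
  apply: eq_bigr => j _; rewrite hrs. done.
rewrite hl hsum hs in pin2.
rewrite vNup vN2 vNo /h2.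
have p1 : 1 - mu = p by lra.
rewrite p1. lra.
Qed.
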